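(* Let $r\ge1$, $\ell\ge1$, $N\ge2r+1$, and let $w\in\mathcal B$ be a word of weight $N$ and level $\ell$. Then (a) $\partial_{2r+1}(w)\in\mathbb Q\langle\mathcal X\rangle_{2r+1}\otimes F_{\ell-1}\mathcal B$; and (b) $\partial_{2r+1}(w)\equiv\eta \pmod{\mathbb Q\langle\mathcal X\rangle_{2r+1}\otimes F_{\ell-2}\mathcal B}$ for some $\eta\in\mathcal B^1\otimes(\text{span of words in }\mathcal B\text{ of weight }N-2r-1\text{ and level exactly }\ell-1)$. Equivalently, the induced map $\partial^{(\ell)}_{2r+1}:\operatorname{gr}^F_\ell(\mathcal B)_N\to\mathbb Q\langle\mathcal X\rangle_{2r+1}\otimes\operatorname{gr}^F_{\ell-1}(\mathcal B)_{N-2r-1}$ takes values in $\mathcal B^1\otimes\operatorname{gr}^F_{\ell-1}(\mathcal B)_{N-2r-1}$.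
   Context: $\mathcal X=\{x_0,x_1\}$, $\mathbb Q\langle\mathcal X\rangle$ free noncommutative polynomials graded by weight (number of letters), weight-$n$ part $\mathbb Q\langle\mathcal X\rangle_n$. $\mathcal B$ is the span of all concatenations of $x_0x_1$ and $x_0x_0x_1$; the level of such a word is the number of blocks $x_0x_0x_1$ in it; $F_\ell\mathcal B$ is the span of words of level $\le\ell$ ($F_{-1}\mathcal B=0$), and $\operatorname{gr}^F_\ell\mathcal B=F_\ell\mathcal B/F_{\ell-1}\mathcal B$. $\mathcal B^1\subset\mathbb Q\langle\mathcal X\rangle$ is the span of the words $(x_0x_1)^ax_0x_0x_1(x_0x_1)^b$ ($a,b\ge0$) and $(x_0x_1)^nx_0$ ($n\ge0$). For letters: $I(x_1;f;x_0)=f$, $I(x_0;f;x_1)=S(f)$ with $S(\varepsilon_1\cdots\varepsilon_m)=(-1)^m\varepsilon_m\cdots\varepsilon_1$, $I(\varepsilon;f;\varepsilon)$ = coefficient of $\mathbf1$ in $f$ times $\mathbf1$. For a word $w=\varepsilon_1\cdots\varepsilon_N$, $\partial_{2r+1}(w)=\sum_{j=0}^{N-2r-1}I(\varepsilon_j;\varepsilon_{j+1}\cdots\varepsilon_{j+2r+1};\varepsilon_{j+2r+2})\otimes\varepsilon_1\cdots\varepsilon_j\varepsilon_{j+2r+2}\cdots\varepsilon_N$ with $\varepsilon_0=x_1$, $\varepsilon_{N+1}=x_0$, extended linearly. *)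

(* Defs.v *)
From mathcomp Require Import all_boot all_order all_algebra.
Set Implicit Arguments. Unset Strict Implicit. Unset Printing Implicit Defensive.
Import Order.TTheory GRing.Theory Num.Theory.

Definition x0 : bool := false.
Definition x1 : bool := true.
Definition word := seq bool.

(* Membership in (the spanning set of words of) B: a word is a concatenation of
   blocks x0x1 and x0x0x1 (the decomposition is unique). *)
Fixpoint inB (w : word) : bool :=
  match w with
  | [::] => true
  | false :: true :: s => inB s
  | false :: false :: true :: s => inB s
  | _ => false
  end.

(* Level: number of blocks x0x0x1 (meaningful for words in B). *)
Fixpoint level (w : word) : nat :=
  match w with
  | false :: true :: s => level s
  | false :: false :: true :: s => (level s).+1
  | _ => 0
  end.

(* Words spanning F_k B (k : int, so that F_{-1} B = 0). *)
Definition inF (k : int) (w : word) : Prop := inB w /\ ((level w)%:Z <= k)%R.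

Definition pw01 (a : nat) : word := flatten (nseq a [:: x0; x1]).

Definition inB1 (w : word) : Prop :=
  (exists a b, w = pw01 a ++ [:: x0; x0; x1] ++ pw01 b) \/
  (exists n, w = pw01 n ++ [:: x0]).

(* Elements of Q<X> are formal finite sums of (coefficient, word);
   elements of Q<X> (x) Q<X> are formal finite sums of (coefficient, (word, word)). *)
Definition ncpoly := seq (rat * word).
Definition tensor := seq (rat * (word * word)).

Definition tcoef (t : tensor) (u v : word) : rat :=
  (\sum_(x <- t | x.2 == (u, v)) x.1)%R.

(* A tensor (given by its coefficient function) lies in span(P) (x) span(Q),
   for P, Q sets of words (monomial subspaces). *)
Definition tsupp (P Q : word -> Prop) (f : word -> word -> rat) : Prop :=
  forall u v, f u v != 0%R -> P u /\ Q v.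

Definition Iw (a : bool) (u : word) (b : bool) : ncpoly :=
  if a == b then (if u == [::] then [:: (1%R, [::])] else [::])
  else if a == x1 then [:: (1%R, u)]      (* I(x1; f; x0) = f *)
  else [:: ((-1) ^+ size u, rev u)%R].     (* I(x0; f; x1) = S(f) *)

(* partial_{2r+1}(w) for a word w = e_1 ... e_N, with e_0 = x1, e_{N+1} = x0;
   the sum over j = 0 .. N-2r-1. *)
Definition dpart (r : nat) (w : word) : tensor :=
  let ext := x1 :: w ++ [:: x0] in
  flatten [seq [seq (c.1, (c.2, take j w ++ drop (j + r.*2.+1) w))
               | c <- Iw (nth x0 ext j) (take r.*2.+1 (drop j w))
                         (nth x0 ext (j + r.*2.+2))]
          | j <- iota 0 (size w - r.*2)].

(* Main.v *)
Require Import Defs.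
From mathcomp Require Import all_boot all_order all_algebra.
From mathcomp Require Import zify.
Set Implicit Arguments. Unset Strict Implicit. Unset Printing Implicit Defensive.


Definition lok (w : seq bool) := ~~ infix [:: true; true] w && ~~ infix [:: false; false; false] w.

Lemma lok_cons2 a b t : lok (a :: b :: t) = ~~ (a && b) && [|| a, b | head true t] && lok (b :: t).
Proof.
rewrite /lok !infix_consl.
case: a; case: b; case: t => [|c t]; rewrite /= ?prefix0s ?orbF ?orbT ?andbF //=;
  try case: c => /=; rewrite ?prefix0s ?orbF ?orbT ?andbF ?andbT //=.
Qed.

Lemma lok1 a : lok [:: a]. Proof. by case: a. Qed.
Lemma lok0 : lok [::]. Proof. by []. Qed.

Lemma lok_catl A B : lok (A ++ B) -> lok A.
Proof. rewrite /lok => /andP[h1 h2]; apply/andP; split.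
  by apply: contra h1; apply: infix_catr. by apply: contra h2; apply: infix_catr. Qed.

Lemma lok_catr A B : lok (A ++ B) -> lok B.
Proof. rewrite /lok => /andP[h1 h2]; apply/andP; split.
  by apply: contra h1; apply: infix_catl. by apply: contra h2; apply: infix_catl. Qed.

Lemma lok_rev A : lok (rev A) = lok A.
Proof. by rewrite /lok -(infix_rev [:: true; true]) -(infix_rev [:: false; false; false]) revK. Qed.

Lemma lok_tl a t : lok (a :: t) -> lok t.
Proof. by rewrite -cat1s; apply: lok_catr. Qed.

Lemma lok_cat a X b Y : lok (rcons X a) -> lok (b :: Y) -> a != b -> lok (rcons X a ++ b :: Y).
Proof.
move=> hX hY ab; elim: X hX => [|x [|y X''] IH] /= hX.
- by rewrite lok_cons2 hY andbT; clear -ab; move: ab; case: a; case: b.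
- rewrite !lok_cons2 hY andbT; rewrite lok_cons2 in hX.
  by clear -ab hX; move: ab hX; case: a; case: b; case: x.
- rewrite lok_cons2; rewrite lok_cons2 in hX.
  case/andP: hX => hA h3. case/andP: hA => h1 h2.
  rewrite h1 IH //=.
  by rewrite andbT; case: X'' {IH h3} h2.
Qed.

Lemma inB_lok w : inB w = lok (x1 :: w ++ [:: x0]) && (last x1 w == x1).
Proof.
have [n] := ubnP (size w); elim: n w => // n IH w Hs.
case: w Hs => [|[] w] Hs; first by rewrite lok_cons2.
  by rewrite /= lok_cons2.
case: w Hs => [|[] w] Hs //.
  by rewrite /= !lok_cons2 /= IH //=; simpl in Hs; lia.
case: w Hs => [|[] w] Hs //.
  by rewrite /= !lok_cons2 /= IH //=; simpl in Hs; lia.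
by rewrite /= !lok_cons2.
Qed.

Lemma level_count w : inB w -> level w + (count id w).*2 = size w.
Proof.
have [n] := ubnP (size w); elim: n w => // n IH w Hs.
case: w Hs => [|[] w] Hs //.
case: w Hs => [|[] w] Hs //.
  move=> /= hB; have := IH w; simpl in Hs; move/(_ ltac:(lia) hB); lia.
case: w Hs => [|[] w] Hs //.
  move=> /= hB; have := IH w; simpl in Hs; move/(_ ltac:(lia) hB); lia.
Qed.

Lemma lok_count w : lok w -> (count id w).*2 <= (size w).+1.
Proof.
have [n] := ubnP (size w); elim: n w => // n IH w Hs.
case: w Hs => [|[] w] Hs //.
  case: w Hs => [|[] w] Hs //.
    by rewrite lok_cons2.
  rewrite lok_cons2 => /andP[_ /lok_tl h]; have := IH w; simpl in Hs;
    move/(_ ltac:(lia) h) => /=; lia.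
move=> /lok_tl h; have := IH w; simpl in Hs; move/(_ ltac:(lia) h) => /=; lia.
Qed.

Lemma pw01S a : pw01 a.+1 = [:: x0; x1] ++ pw01 a.
Proof. by []. Qed.

Lemma pw_lemma k t : lok (x1 :: t ++ [:: x0]) -> size t = k.*2 -> count id t = k -> t = pw01 k.
Proof.
elim: k t => [|k IH] [|a [|b t]] //=.
case: a; first by rewrite lok_cons2.
case: b.
  rewrite !lok_cons2 /= => h [hs] [hc].
  by rewrite (IH t h hs hc).
move=> h [hs] hc.
have h' : lok ((x1 :: false :: false :: t) ++ [:: x0]) by [].
have := lok_count (lok_tl (lok_tl (lok_tl (lok_catl h')))); simpl in hc; lia.
Qed.

Lemma B1_lemma r c : lok (x1 :: c ++ [:: x0]) -> size c = r.*2.+1 -> count id c = r -> inB1 c.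
Proof.
elim: r c => [|r IH] [|a [|b c]] //=.
  case: a => _ _ //= _; by right; exists 0.
case: a; first by rewrite lok_cons2.
case: b.
  rewrite !lok_cons2 /= => h [hs] [hc].
  case: (IH c h hs hc) => [[a' [b' ->]]|[n' ->]].
    by left; exists a'.+1, b'.
  by right; exists n'.+1.
case: c => [|[] c] //=; last by rewrite !lok_cons2.
rewrite !lok_cons2 /= => h [hs] hc.
left; exists 0, r => /=.
by rewrite (@pw_lemma r c h) //; lia.
Qed.

Lemma last_aux p u s : last x1 (p ++ u ++ s) == x1 -> last x1 p != head x0 s -> last x1 (p ++ s) == x1.
Proof.
case: s => [|z s'] /=.
  by rewrite !cats0 => _; case: (last x1 p).
by rewrite !last_cat.
Qed.

Lemma hc_aux a b u : lok (a :: u ++ [:: b]) -> a != b -> lok (x1 :: (if a == x1 then u else rev u) ++ [:: x0]).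
Proof.
case: a; case: b => //= hM _.
by rewrite -lok_rev rev_cons rev_cat revK /= -cats1.
Qed.

Lemma key r p u s : inB (p ++ u ++ s) -> size u = r.*2.+1 -> last x1 p != head x0 s ->
 [/\ inB (p ++ s), (level (p ++ s)).+1 <= level (p ++ u ++ s) &
   ((level (p ++ s)).+1 = level (p ++ u ++ s) -> inB1 (if last x1 p == x1 then u else rev u))].
Proof.
move=> hB hu hab.
move: (hB); rewrite inB_lok => /andP[hL hlast].
set a := last x1 p in hab *; set b := head x0 s in hab *.
set Y' := behead (s ++ [:: x0]).
have hY : s ++ [:: x0] = b :: Y' by rewrite /Y' /b; case: (s).
have E : x1 :: (p ++ u ++ s) ++ [:: x0] = rcons (belast x1 p) a ++ u ++ b :: Y'.
  by rewrite -hY /a -lastI /= -!catA.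
rewrite E in hL.
have hX : lok (rcons (belast x1 p) a) by apply: lok_catl hL.
have hYl : lok (b :: Y') by apply: lok_catr (lok_catr hL).
have hM : lok (a :: u ++ [:: b]).
  move: hL; rewrite -cats1 -!catA /= => /lok_catr.
  have -> : a :: u ++ b :: Y' = (a :: u ++ [:: b]) ++ Y' by rewrite /= -catA.
  by move/lok_catl.
have hv := lok_cat hX hYl hab.
have hBv : inB (p ++ s).
  rewrite inB_lok; apply/andP; split; last by apply: last_aux hlast hab.
  have -> : x1 :: (p ++ s) ++ [:: x0] = rcons (belast x1 p) a ++ b :: Y'.
    by rewrite -hY /a -lastI /= catA.
  exact: hv.
have hc := hc_aux hM hab.
set c := if a == x1 then u else rev u in hc *.
have hcs : size c = r.*2.+1 by rewrite /c; case: (_ == _); rewrite ?size_rev.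
have hcc : count id c = count id u by rewrite /c; case: (_ == _); rewrite ?count_rev.
have hcnt := lok_count (lok_catl (hc : lok ((x1 :: c) ++ [:: x0]))).
have lw := level_count hB; have lv := level_count hBv.
rewrite !size_cat !count_cat /= in lw lv hcnt.
have [h1 h2] : level (p ++ s) < level (p ++ u ++ s) /\
   ((level (p ++ s)).+1 = level (p ++ u ++ s) -> count id c = r).
  move: lw lv hcnt hu hcs hcc.
  move: (level (p ++ s)) (level (p ++ u ++ s)) (count id p) (count id u) (count id s) (count id c)
        (size p) (size u) (size s) (size c).
  clear; move=> *; lia.
split => // hl; apply: (B1_lemma hc hcs); exact: h2.
Qed.

Lemma nth_last y p R : nth x0 (y :: p ++ R) (size p) = last y p.
Proof. by elim: p y => [|z p IH] y //=; rewrite IH. Qed.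

Lemma dpart_mem r w x : x \in dpart r w -> inB w ->
  [/\ size x.2.1 = r.*2.+1, inB x.2.2, size x.2.2 = size w - r.*2.+1,
      (level x.2.2).+1 <= level w & ((level x.2.2).+1 = level w -> inB1 x.2.1)].
Proof.
rewrite /dpart => /flatten_mapP[j]; rewrite mem_iota => /andP[_ hj] /mapP[c hc ->] /= hB.
set u := take r.*2.+1 (drop j w) in hc *.
set p := take j w; set s := drop (j + r.*2.+1) w.
have hu : size u = r.*2.+1 by rewrite /u size_takel // size_drop; lia.
have hp : size p = j by rewrite /p size_takel //; lia.
have hw : w = p ++ u ++ s.
  by rewrite /s addnC -drop_drop /u /p !cat_take_drop.
have ha : nth x0 (x1 :: w ++ [:: x0]) j = last x1 p.
  by rewrite {1}hw -catA -hp nth_last.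
have hb : nth x0 (x1 :: w ++ [:: x0]) (j + r.*2.+2) = head x0 s.
  have -> : x1 :: w ++ [:: x0] = (x1 :: p ++ u) ++ (s ++ [:: x0]) by rewrite {1}hw /= -!catA.
  rewrite nth_cat /= size_cat hp hu ltnNge.
  have -> : j + r.*2.+2 - (j + r.*2.+1).+1 = 0 by lia.
  rewrite (_ : (j + r.*2.+1 < j + r.*2.+2) = true) /=; last by apply/idP; lia.
  by case: (s).
rewrite ha hb in hc.
have un : (u == [::]) = false by apply/eqP => e; rewrite e in hu.
have hvs : size (p ++ s) = size w - r.*2.+1 by rewrite [in size w]hw !size_cat hu; lia.
move: hc; rewrite /Iw; case: ifP => hab; first by rewrite un.
have hab' : last x1 p != head x0 s by rewrite hab.
rewrite hw in hB; have [k1 k2 k3] := key hB hu hab'.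
rewrite -hw in k2 k3.
case: ifP => ha1; rewrite inE => /eqP -> /=; split => //; rewrite ha1 in k3.
  exact: k3.
by rewrite size_rev.
exact: k3.
Qed.

Lemma tcoef_supp t u v : tcoef t u v != 0%R -> exists2 x, x \in t & x.2 = (u, v).
Proof.
elim: t => [|y t IH]; first by rewrite /tcoef big_nil eqxx.
rewrite /tcoef big_cons; case: (boolP (y.2 == (u, v))) => [/eqP e _|_ h].
  by exists y; rewrite ?in_cons ?eqxx.
have [x hx ex] := IH h.
by exists x; rewrite // in_cons hx orbT.
Qed.

Lemma tcoef_filter (f : word -> bool) t u v :
  tcoef [seq x <- t | f x.2.2] u v = if f v then tcoef t u v else 0%R.
Proof.
elim: t => [|y t IH]; first by rewrite /tcoef /= !big_nil; case: ifP.
rewrite /= /tcoef big_cons; case: ifP => fy.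
  rewrite big_cons -/(tcoef _ _ _) IH /tcoef.
  case: eqP => [e|_]; last by [].
  by rewrite e /= in fy; rewrite fy.
rewrite -/(tcoef _ _ _) IH /tcoef; case: eqP => [e|//].
by rewrite e /= in fy; rewrite fy.
Qed.
Unset Implicit Arguments.
Import Order.TTheory GRing.Theory Num.Theory.

Theorem mainTheorem16 (r l N : nat) (w : word) :
  1 <= r -> 1 <= l -> r.*2.+1 <= N ->
  inB w -> size w = N -> level w = l ->
  tsupp (fun u => size u = r.*2.+1) (inF (l%:Z - 1)%R) (tcoef (dpart r w)) /\
  exists eta : tensor,
    tsupp inB1 (fun v => [/\ inB v, size v = N - r.*2.+1 & level v = l - 1])
          (tcoef eta) /\
    tsupp (fun u => size u = r.*2.+1) (inF (l%:Z - 2)%R)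
          (fun u v => (tcoef (dpart r w) u v - tcoef eta u v)%R).
Proof.
move=> hr hl hN hB hs hlev.
have P : forall u v, tcoef (dpart r w) u v != 0%R ->
  [/\ size u = r.*2.+1, inB v, size v = N - r.*2.+1,
      (level v).+1 <= l & ((level v).+1 = l -> inB1 u)].
  move=> u v /tcoef_supp [[q [u' v']] hx [<- <-]].
  by have := dpart_mem hx hB; rewrite hs hlev.
split.
  move=> u v /P [h1 h2 h3 h4 h5]; split => //; split => //; lia.
exists [seq x <- dpart r w | level x.2.2 == l - 1]; split.
  move=> u v; rewrite (tcoef_filter (fun v => level v == l - 1)); case: (boolP (level v == l - 1)) => hv; last by rewrite eqxx.
  move/eqP: hv => hv.
  move=> /P [h1 h2 h3 h4 h5]; split; first by apply: h5; lia.
  by split.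
move=> u v; rewrite (tcoef_filter (fun v => level v == l - 1)); case: (boolP (level v == l - 1)) => hv; first by rewrite subrr eqxx.
move/eqP: hv => hv.
rewrite subr0 => /P [h1 h2 h3 h4 h5]; split => //; split => //; lia.
Qed.
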